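(* Let $n$ be a positive integer, $Q \in \{L,R\}$ and $X \in \mathcal{RB}_n$. Suppose there is a positive integer $i$ with $XQ^i \notin \mathcal{RB}_n$, and let $i$ be the least such positive integer. Then $i \leq n$.
   Context: $L = \begin{pmatrix} 1 & 0 \\ 1 & 1\end{pmatrix}$, $R = \begin{pmatrix} 1 & 1 \\ 0 & 1\end{pmatrix}$. For a positive integer $n$, $\mathcal{D}_n$ is the set of $2\times 2$ matrices $A$ with nonnegative integer entries, $\det A = n$, and the greatest common divisor of all entries of $A$ equal to $1$. $\mathcal{RB}_n = \left\{ \begin{pmatrix} a & b \\ c & d\end{pmatrix} \in \mathcal{D}_n : a > c \text{ and } d > b\right\}$. *)

(* Defs.v *)
From mathcomp Require Import all_boot.
Set Implicit Arguments. Unset Strict Implicit. Unset Printing Implicit Defensive.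

Record mat2 := Mat2 { ma : nat; mb : nat; mc : nat; md : nat }.

Definition mmul (X Y : mat2) : mat2 :=
  Mat2 (ma X * ma Y + mb X * mc Y) (ma X * mb Y + mb X * md Y)
       (mc X * ma Y + md X * mc Y) (mc X * mb Y + md X * md Y).

Definition Lm : mat2 := Mat2 1 0 1 1.
Definition Rm : mat2 := Mat2 1 1 0 1.

Fixpoint mpow (Q : mat2) (i : nat) : mat2 :=
  match i with 0 => Mat2 1 0 0 1 | i'.+1 => mmul (mpow Q i') Q end.

(* det X = n, written over nat as a*d = b*c + n (equivalent to ad - bc = n in Z) *)
Definition in_D (n : nat) (X : mat2) : Prop :=
  ma X * md X = mb X * mc X + n /\
  gcdn (gcdn (ma X) (mb X)) (gcdn (mc X) (md X)) = 1.

Definition in_RB (n : nat) (X : mat2) : Prop :=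
  in_D n X /\ mc X < ma X /\ mb X < md X.

(* Main.v *)
Require Import Defs.
From mathcomp Require Import all_boot.
From mathcomp Require Import zify.

Lemma mpowR j : mpow Rm j = Mat2 1 j 0 1.
Proof. elim: j => [|j IH] //=; rewrite IH /mmul /=; congr Mat2; lia. Qed.

Lemma mpowL j : mpow Lm j = Mat2 1 0 j 1.
Proof. elim: j => [|j IH] //=; rewrite IH /mmul /=; congr Mat2; lia. Qed.

Theorem lemma16 (n : nat) (Q X : mat2) (i : nat) :
  0 < n -> (Q = Lm \/ Q = Rm) -> in_RB n X ->
  0 < i -> ~ in_RB n (mmul X (mpow Q i)) ->
  (forall j, 0 < j -> j < i -> in_RB n (mmul X (mpow Q j))) ->
  i <= n.
Proof.
move=> n0 HQ [[Hdet _] [Hca Hbd]] i0 _ Hall.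
rewrite leqNgt; apply/negP => ni.
have [_ [H1 H2]] := Hall n n0 ni.
clear Hall; case: X Hdet Hca Hbd H1 H2 => a b c d /= Hdet Hca Hbd.
case: HQ => ->; rewrite ?mpowL ?mpowR /mmul /= => H1 H2; nia.
Qed.
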